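(* Let $G$ be a finite median graph and let $m$ be the maximum dimension of a hypercube contained in $G$. Then $C(G,x)=\sum_{i=0}^m b_i(G)(x+1)^i$, where $b_0(G)=1$ and $b_i(G)$ is a positive integer for each $0\le i\le m$.
   Context: A median of vertices $u,v,w$ of a graph is a vertex lying simultaneously on a shortest $u,v$-path, a shortest $u,w$-path and a shortest $v,w$-path; a (connected) graph is a median graph if every triple of vertices has a unique median. The cube polynomial of $G$ is $C(G,x)=\sum_{i\ge0}\alpha_i(G)x^i$, where $\alpha_i(G)$ is the number of induced subgraphs of $G$ isomorphic to the $i$-dimensional hypercube $Q_i$. *)

(* Defs.v *)
(* A finite simple graph is a symmetric irreflexive relation
   e : rel T on a finType T. *)
From mathcomp Require Import all_boot all_order all_algebra.
Set Implicit Arguments. Unset Strict Implicit. Unset Printing Implicit Defensive.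
Import GRing.Theory.
Local Open Scope ring_scope.

Section Graphs.
Variables (T : finType) (e : rel T).

(* p is a walk from u to v (u :: p is the vertex sequence, size p its length) *)
Definition walk (u v : T) (p : seq T) : bool := path e u p && (last u p == v).

Definition shortest_path (u v : T) (p : seq T) : Prop :=
  walk u v p /\ forall q : seq T, walk u v q -> (size p <= size q)%N.

Definition on_shortest (u v x : T) : Prop :=
  exists p : seq T, shortest_path u v p /\ x \in u :: p.

Definition is_median (u v w x : T) : Prop :=
  on_shortest u v x /\ on_shortest u w x /\ on_shortest v w x.

Definition connected_graph : Prop :=
  (0 < #|T|)%N /\ forall u v : T, exists p : seq T, walk u v p.

Definition median_graph : Prop :=
  connected_graph /\ forall u v w : T, exists! x : T, is_median u v w x.

Definition qadj (i : nat) (a b : {ffun 'I_i -> bool}) : bool :=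
  #|[set k | a k != b k]| == 1%N.

Definition induces_cube (i : nat) (S : {set T}) : bool :=
  [exists f : {ffun {ffun 'I_i -> bool} -> T},
     [&& injectiveb f, f @: setT == S &
         [forall a, forall b, e (f a) (f b) == qadj a b]]].

Definition alpha (i : nat) : nat := #|[set S : {set T} | induces_cube i S]|.

(* cube polynomial; alpha_i = 0 for i > #|T| since 2^i > i *)
Definition cube_poly : {poly int} := \poly_(i < #|T|.+1) (alpha i)%:R.

Definition cube_dim : nat := \max_(i < #|T|.+1 | (0 < alpha i)%N) (i : nat).

End Graphs.

(* Main.v *)
Require Import Defs.
From mathcomp Require Import all_boot all_order all_algebra zify.
Set Implicit Arguments. Unset Strict Implicit. Unset Printing Implicit Defensive.

Ltac sxb := rewrite !inE;
  repeat (case: eqP => //= ?; subst); rewrite ?eqxx //=;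
  try match goal with H : is_true (?a != ?a) |- _ => by rewrite eqxx in H end;
  try (match goal with H : is_true (?a \in ?b) |- _ => rewrite H end);
  try by repeat (case: (_ \in _) => //=).
Ltac csx := let x := fresh "x" in apply: eq_card => x; sxb.
Ltac sx := let x := fresh "x" in apply/setP => x; rewrite !inE;
  repeat (case: eqP => //= ?; subst); rewrite ?eqxx //=;
  try match goal with H : is_true (?a != ?a) |- _ => by rewrite eqxx in H end;
  try (match goal with H : is_true (?a \in ?b) |- _ => rewrite H end);
  try by repeat (case: (_ \in _) => //=).

Section Dist.
Variables (T : finType) (e : rel T).
Hypothesis e_sym : symmetric e.
Hypothesis e_irr : irreflexive e.
Hypothesis Hmed : median_graph e.

Lemma walk_cat u v w p q : walk e u v p -> walk e v w q -> walk e u w (p ++ q).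
Proof.
rewrite /walk => /andP[p1 /eqP l1] /andP[q1 /eqP l2].
by rewrite cat_path p1 l1 q1 last_cat l1 l2 eqxx.
Qed.

Lemma last_rev_belast (u : T) p v : last v (rev (belast u p)) = if p is [::] then v else u.
Proof. by case: p => [|x p] //=; rewrite rev_cons last_rcons. Qed.

Lemma walk_rev u v p : walk e u v p -> walk e v u (rev (belast u p)).
Proof.
rewrite /walk => /andP[pp /eqP lp]; subst v.
have esym' : (fun z => e^~ z) =2 e by move=> x y; rewrite e_sym.
rewrite rev_path (eq_path esym') pp /= last_rev_belast.
by case: p {pp}.
Qed.

Lemma size_rev_belast (u : T) p : size (rev (belast u p)) = size p.
Proof. by rewrite size_rev size_belast. Qed.

Lemma walk_ex u v : exists n, [exists t : n.-tuple T, walk e u v t].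
Proof.
case: Hmed => [[_ Hc] _]; case: (Hc u v) => p Hp.
by exists (size p); apply/existsP; exists (in_tuple p).
Qed.

Definition dist u v := ex_minn (walk_ex u v).

Lemma distP u v : exists2 p, walk e u v p & size p = dist u v.
Proof.
rewrite /dist; case: ex_minnP => n /existsP[t Ht] _.
by exists t => //; rewrite size_tuple.
Qed.

Lemma dist_min u v p : walk e u v p -> (dist u v <= size p)%N.
Proof.
move=> Hp; rewrite /dist; case: ex_minnP => n _ Hmin; apply: Hmin.
by apply/existsP; exists (in_tuple p).
Qed.

Lemma dist_sym u v : dist u v = dist v u.
Proof.
apply/eqP; rewrite eqn_leq; case: (distP u v) => p Hp Sp; case: (distP v u) => q Hq Sq.
have h1 := dist_min (walk_rev Hp); have h2 := dist_min (walk_rev Hq).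
by rewrite size_rev_belast in h1; rewrite size_rev_belast in h2; rewrite -{1}Sq -{2}Sp h1 h2.
Qed.

Lemma dist_tri u v w : (dist u w <= dist u v + dist v w)%N.
Proof.
case: (distP u v) => p Hp <-; case: (distP v w) => q Hq <-.
by rewrite -size_cat dist_min // (walk_cat Hp Hq).
Qed.

Lemma dist0 u : dist u u = 0%N.
Proof. by apply/eqP; rewrite -leqn0; apply: (@dist_min u u [::]); rewrite /walk /= eqxx. Qed.

Lemma dist_eq0 u v : dist u v = 0%N -> u = v.
Proof. by case: (distP u v) => -[|x p] /andP[_ /eqP] // <- <-. Qed.

Lemma dist_edge u v : e u v -> dist u v = 1%N.
Proof.
move=> uv; apply/eqP; rewrite eqn_leq (@dist_min u v [:: v]) /=; last by rewrite /walk /= uv eqxx.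
rewrite lt0n; apply/eqP=> /dist_eq0 E; subst v; by rewrite e_irr in uv.
Qed.

Lemma dist1_edge u v : dist u v = 1%N -> e u v.
Proof.
case: (distP u v) => -[|x [|y p]] /andP[/= pp /eqP Hl] // <- // _.
by rewrite -Hl; case/andP: pp.
Qed.

Lemma edge_dist u v : e u v = (dist u v == 1%N).
Proof. by apply/idP/eqP; [apply: dist_edge | apply: dist1_edge]. Qed.

Lemma dist_shortest u v p : shortest_path e u v p <-> walk e u v p /\ size p = dist u v.
Proof.
split=> [[Hw Hm]|[Hw Hs]].
  split=> //; apply/eqP; rewrite eqn_leq dist_min // andbT.
  by case: (distP u v) => q Hq <-; apply: Hm.
by split=> // q Hq; rewrite Hs dist_min.
Qed.

Lemma on_shortestE u v x : on_shortest e u v x <-> dist u x + dist x v = dist u v.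
Proof.
split.
  case=> p [/dist_shortest [Hw Hs] Hx].
  case/splitPl: Hx Hw Hs => p1 p2 Hl.
  rewrite /walk cat_path last_cat -Hl => /andP[/andP[h1 h2] h3] Hs.
  apply/eqP; rewrite eqn_leq dist_tri andbT -Hs size_cat leq_add //.
    by apply: dist_min; rewrite /walk h1 Hl eqxx.
  by apply: dist_min; rewrite /walk h2 h3.
move=> H; case: (distP u x) => p Hp Sp; case: (distP x v) => q Hq Sq.
exists (p ++ q); split.
  by apply/dist_shortest; split; [apply: walk_cat Hp Hq | rewrite size_cat Sp Sq].
case/andP: Hp => _ /eqP <-.
by rewrite -cat_cons lastI mem_cat mem_rcons in_cons eqxx.
Qed.

Definition medp u v w x := [/\ dist u x + dist x v = dist u v,
  dist u x + dist x w = dist u w & dist v x + dist x w = dist v w].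

Lemma med_ex u v w : exists x, medp u v w x.
Proof.
case: Hmed => _ /(_ u v w) [x [[H1 [H2 H3]] _]]; exists x.
by split; apply/on_shortestE.
Qed.

Lemma med_uniq u v w x y : medp u v w x -> medp u v w y -> x = y.
Proof.
case: Hmed => _ /(_ u v w) [m [_ Hu]] [x1 x2 x3] [y1 y2 y3].
have hx : is_median e u v w x by split; [|split]; apply/on_shortestE.
have hy : is_median e u v w y by split; [|split]; apply/on_shortestE.
by rewrite -(Hu _ hx) (Hu _ hy).
Qed.


Local Notation d := dist.

Lemma edge_step w a b : e a b -> d w b = (d w a).+1 \/ d w a = (d w b).+1.
Proof.
move=> ab; have dab := dist_edge ab.
case: (med_ex w a b) => m [h1 h2 h3].
rewrite dab in h3.
have [E|E] : d a m = 0%N \/ d m b = 0%N by lia.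
  move/dist_eq0: E => E; subst m; rewrite dist0 in h1 h3; lia.
move/dist_eq0: E => E; subst m; rewrite dist0 (dist_sym b a) in h1 h2 h3; lia.
Qed.

Lemma edge_ne w a b : e a b -> d w a != d w b.
Proof. by case/(edge_step w) => ->; rewrite ?(gtn_eqF (ltnSn _)) ?(ltn_eqF (ltnSn _)). Qed.

Lemma nonadj w a b : d w a = d w b -> ~~ e a b.
Proof. by move=> E; apply/negP => /(edge_ne w); rewrite E eqxx. Qed.

Lemma walk_parity w a b p : walk e a b p -> odd (d w b) = odd (d w a + size p).
Proof.
elim: p a => [|x p IH] a /=; first by rewrite /walk /= => /eqP ->; rewrite addn0.
rewrite /walk /= => /andP[/andP[ax px] lx].
rewrite (IH x); last by rewrite /walk px lx.
case: (edge_step w ax) => ->; rewrite addSn addnS //.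
by rewrite !oddS negbK.
Qed.

Lemma dist_parity w a b : odd (d w b) = odd (d w a + d a b).
Proof. by case: (distP a b) => p Hp <-; apply: walk_parity. Qed.

Lemma dist2 w x a b : a != b -> d w a = d w b -> e x a -> e x b -> d a b = 2.
Proof.
move=> ab E xa xb; apply/eqP; rewrite eqn_leq.
have -> : (d a b <= 2)%N.
  by have := dist_tri a x b; rewrite (dist_sym a x) (dist_edge xa) (dist_edge xb).
case E2: (d a b) => [|[|k]] //.
  by move/dist_eq0: E2 => E2; rewrite E2 eqxx in ab.
by move/dist1_edge: E2; rewrite (negbTE (nonadj E)).
Qed.

Lemma edge_dist' u v : e u v -> d u v = 1%N.
Proof. exact: dist_edge. Qed.

Lemma K23 x1 x2 c1 c2 c3 : x1 != x2 ->
  c1 != c2 -> c1 != c3 -> c2 != c3 ->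
  e x1 c1 -> e x1 c2 -> e x1 c3 -> e x2 c1 -> e x2 c2 -> e x2 c3 ->
  ~~ e c1 c2 -> ~~ e c1 c3 -> ~~ e c2 c3 -> False.
Proof.
move=> x12 c12 c13 c23 a1 a2 a3 b1 b2 b3 n12 n13 n23.
have D x y u : x != y -> ~~ e x y -> e u x -> e u y -> d x y = 2.
  move=> xy nxy ux uy; apply/eqP; rewrite eqn_leq.
  have -> : (d x y <= 2)%N.
    by have := dist_tri x u y; rewrite (dist_sym x u) (dist_edge ux) (dist_edge uy).
  case E2: (d x y) => [|[|k]] //.
    by move/dist_eq0: E2 => E2; rewrite E2 eqxx in xy.
  by move/dist1_edge: E2; rewrite (negbTE nxy).
have M x : e x c1 -> e x c2 -> e x c3 -> medp c1 c2 c3 x.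
  move=> h1 h2 h3; rewrite /medp (D c1 c2 x) // (D c1 c3 x) // (D c2 c3 x) //.
  by rewrite !(dist_sym _ x) !dist_edge.
by move/eqP: x12; apply; apply: (med_uniq (M _ a1 a2 a3) (M _ b1 b2 b3)).
Qed.

Section Base.
Variable z : T.
Local Notation h := (d z).

Lemma square x a b : e x a -> e x b -> a != b -> h a = h b -> (h a).+1 = h x ->
  exists c, [/\ e a c, e b c & (h c).+1 = h a].
Proof.
move=> xa xb ab Eab Ha.
have dab := dist2 ab Eab xa xb.
case: (med_ex z a b) => m [h1 h2 h3].
have E : d m a = d m b by apply/eqP; rewrite -(eqn_add2l (h m)) h1 h2 Eab.
rewrite dab (dist_sym a) E in h3.
have E1 : d m b = 1%N by move: h3; rewrite addnn; case: (d m b) => [|[|]].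
exists m; split; try (rewrite e_sym; apply: dist1_edge; congruence).
by rewrite -h1 E E1 addn1.
Qed.

Lemma lower_uniq x y c c' : x != y -> e x c -> e y c -> e x c' -> e y c' ->
  (h c).+1 = h x -> (h c').+1 = h x -> h y = h x -> c = c'.
Proof.
move=> xy xc yc xc' yc' Hc Hc' Ey.
have dxy : d x y = 2 by apply: (dist2 (w := z) (x := c)) => //; rewrite e_sym.
have M u : e x u -> e y u -> (h u).+1 = h x -> medp z x y u.
  move=> xu yu Hu; have d1 := dist_edge xu; have d2 := dist_edge yu.
  rewrite /medp dxy !(dist_sym u) d1 d2; split; lia.
exact: med_uniq (M _ xc yc Hc) (M _ xc' yc' Hc').
Qed.

Lemma edge_h a b : e a b -> h b = (h a).+1 \/ h a = (h b).+1.
Proof. exact: edge_step. Qed.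

Lemma upper_uniq x y t t' : x != y -> e x t -> e y t -> e x t' -> e y t' ->
  (h x).+1 = h t -> (h x).+1 = h t' -> h y = h x -> t = t'.
Proof.
move=> xy xt yt xt' yt' Ht Ht' Ey.
apply/eqP; apply/negP => /negP tt'.
have [c [xc yc Hc]] : exists c, [/\ e x c, e y c & (h c).+1 = h x].
  by apply: (square (x := t)); rewrite 1?e_sym // ?Ey // eq_sym.
have ne1 : t != c by apply/eqP => E; subst c; lia.
have ne2 : t' != c by apply/eqP => E; subst c; lia.
apply: (K23 xy tt' ne1 ne2) => //.
- by apply: (nonadj (w := z)); rewrite -Ht -Ht'.
- by apply/negP => /edge_h; clear -Hc Ht Ht'; lia.
- by apply/negP => /edge_h; clear -Hc Ht Ht'; lia.
Qed.

End Base.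
Section Cube.
Variable I : finType.
Variable X : {set I} -> T.
Local Notation d := dist.

Definition Hcomp := forall B C : {set I}, B \subset C -> d (X B) (X C) = #|C :\: B|.
Definition HLI := forall (B : {set I}) k j, k \notin B -> j \notin B -> k != j -> X (k |: B) != X (j |: B).

Hypothesis Hc : Hcomp.
Hypothesis Hl : HLI.

Lemma setD1D (C B : {set I}) k : (C :\ k) :\: B = (C :\: B) :\ k.
Proof. by apply/setP => x; rewrite !inE; case: (x == k); rewrite ?andbF. Qed.

Lemma setDD1 (C : {set I}) k : k \in C -> C :\: (C :\ k) = [set k].
Proof.
move=> kC; apply/setP => x; rewrite !inE; case: eqP => [->|]; rewrite ?kC //=.
by case: (x \in C).
Qed.

Lemma card_D1 (A : {set I}) k : k \in A -> #|A :\ k| = (#|A|).-1.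
Proof. by move=> kA; rewrite (cardsD1 k A) kA. Qed.

Lemma X_edge (B C : {set I}) : B \subset C -> #|C :\: B| = 1%N -> e (X B) (X C).
Proof. by move=> BC H1; apply: dist1_edge; rewrite Hc. Qed.

Lemma X_edgeD1 (C : {set I}) k : k \in C -> e (X (C :\ k)) (X C).
Proof. by move=> kC; apply: X_edge; [apply: subD1set | rewrite setDD1 // cards1]. Qed.

Lemma LIdown (C : {set I}) k j : k \in C -> j \in C -> k != j -> X (C :\ k) != X (C :\ j).
Proof.
move=> kC jC kj; set B := C :\: [set k; j].
have E1 : C :\ k = j |: B by rewrite /B; sx.
have E2 : C :\ j = k |: B by rewrite /B; sx.
rewrite E1 E2 eq_sym; apply: Hl; rewrite ?inE ?eqxx ?orbT //.
Qed.

Lemma IN n : forall (B C : {set I}) y, #|C :\: B| = n -> B \subset C -> e y (X C) ->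
  (d (X B) y).+1 = n -> exists2 k, k \in C :\: B & y = X (C :\ k).
Proof.
elim: n => [|n IH] B C y Hn BC yC Hd //.
case: n IH Hn Hd => [|n] IH Hn Hd.
  move: Hd => [] /dist_eq0 <-; move/eqP/cards1P: Hn => [k Hk].
  have kCB : k \in C :\: B by rewrite Hk set11.
  exists k => //; congr X; apply/setP => x; move: (Hk) => /setP /(_ x); rewrite !inE.
  case: (eqVneq x k) => [->|xk] /=; first by move: kCB; rewrite inE => /andP[/negbTE -> _].
  by case xB: (x \in B) => //= _; rewrite (subsetP BC _ xB).
case: (boolP [exists k in C :\: B, y == X (C :\ k)]) => [/exists_inP [k kCB /eqP ->]|Hno].
  by exists k.
have Hno' k : k \in C :\: B -> y != X (C :\ k).
  by move=> kCB; apply: contra Hno => Hk; apply/exists_inP; exists k.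
exfalso.
have [k kCB] : exists k, k \in C :\: B by apply/set0Pn; rewrite -cards_eq0 Hn.
have kC : k \in C by move: kCB; rewrite inE => /andP[].
have kB : k \notin B by move: kCB; rewrite inE => /andP[].
have BCk : B \subset C :\ k.
  by apply/subsetP => x xB; rewrite !inE (subsetP BC _ xB) andbT; apply: contraNneq kB => <-.
have Hnk : #|(C :\ k) :\: B| = n.+1 by rewrite setD1D card_D1 // Hn.
set yk := X (C :\ k).
have dk : d (X B) yk = n.+1 by rewrite /yk Hc.
have ykC : e yk (X C) by apply: X_edgeD1.
have yyk : y != yk by apply: Hno'.
have Cy : e (X C) y by rewrite e_sym.
have Cyk : e (X C) yk by rewrite e_sym.
have dyyk : d y yk = 2 by apply: (dist2 (w := X B) (x := X C)) => //; clear -Hd dk; lia.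
case: (med_ex (X B) y yk) => m [m1 m2 m3].
rewrite dist_sym dyyk in m3.
have dmy : d m y = 1%N by clear -m1 m2 m3 dk Hd; lia.
have dmyk : d m yk = 1%N by clear -m1 m2 m3 dk Hd; lia.
have [j jCB Hm] : exists2 j, j \in (C :\ k) :\: B & m = X ((C :\ k) :\ j).
  apply: (IH B (C :\ k) m Hnk BCk); first by rewrite e_sym; apply: dist1_edge; rewrite dist_sym.
  clear -m1 m2 m3 dk Hd; lia.
have jC : j \in C by move: jCB; rewrite !inE => /and3P[].
have jk : j != k by move: jCB; rewrite !inE => /and3P[].
have jB : j \notin B by move: jCB; rewrite !inE => /and3P[].
have jCB' : j \in C :\: B by rewrite inE jB.
set yj := X (C :\ j).
have ykyj : yk != yj by apply: LIdown; rewrite // eq_sym.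
have Ekj : (C :\ k) :\ j = (C :\ j) :\ k by apply/setP => x; rewrite !inE; case: (x == k); case: (x == j).
have dj : d (X B) yj = n.+1.
  rewrite /yj Hc ?setD1D ?card_D1 ?Hn //.
  by apply/subsetP => x xB; rewrite !inE (subsetP BC _ xB) andbT; apply: contraNneq jB => <-.
apply: (K23 (x1 := X C) (x2 := m) (c1 := y) (c2 := yk) (c3 := yj)).
- apply/eqP => E; have : d (X C) m = 2.
    rewrite Hm dist_sym Hc; last by apply/subsetP => x; rewrite !inE => /and3P[_ _ ->].
    rewrite (_ : C :\: ((C :\ k) :\ j) = [set k; j]); last by sx.
    by rewrite cards2 eq_sym jk.
  by rewrite E dist0.
- exact: yyk.
- exact: Hno'.
- exact: ykyj.
- by rewrite e_sym.
- by rewrite e_sym.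
- by rewrite e_sym; apply: X_edgeD1.
- by rewrite e_sym; apply: dist1_edge; rewrite dist_sym.
- by rewrite e_sym; apply: dist1_edge; rewrite dist_sym.
- rewrite Hm Ekj; apply: X_edgeD1; by rewrite !inE kC andbT eq_sym.
- by apply: (nonadj (w := X B)); rewrite dk; clear -Hd; lia.
- by apply: (nonadj (w := X B)); rewrite dj; clear -Hd; lia.
- by apply: (nonadj (w := X B)); rewrite dj dk.
Qed.

End Cube.

Lemma par3 D m : (m.-2 <= D)%N -> (D <= m)%N -> (1 < m)%N -> odd D = odd m -> D = m \/ D = m.-2.
Proof.
case: m => [|[|m]] //= l1 l2 _.
have [->|[->|->]] : D = m \/ D = m.+1 \/ D = m.+2 by lia.
- by right.
- by rewrite /= negbK; case: (odd m).
- by left.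
Qed.

Section Cube2.
Variable I : finType.
Variable X : {set I} -> T.
Local Notation d := dist.
Hypothesis Hc : Hcomp X.
Hypothesis Hl : HLI X.

Lemma Hcomp_flip : Hcomp (fun B => X (~: B)).
Proof.
move=> B C BC; rewrite dist_sym Hc; last by rewrite setCS.
by csx.
Qed.

Lemma HLI_flip : HLI (fun B => X (~: B)).
Proof.
move=> B k j kB jB kj.
have -> : ~: (k |: B) = (~: B) :\ k by sx.
have -> : ~: (j |: B) = (~: B) :\ j by sx.
by apply: LIdown; rewrite ?inE.
Qed.

Lemma INb (B C : {set I}) y : B \subset C -> e y (X B) -> (d y (X C)).+1 = #|C :\: B| ->
  exists2 k, k \in C :\: B & y = X (k |: B).
Proof.
move=> BC yB Hd.
have := @IN I (fun B => X (~: B)) Hcomp_flip HLI_flip #|C :\: B| (~: C) (~: B) y.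
rewrite !setCK dist_sym => H.
case: H => //; first by csx.
  by rewrite setCS.
move=> k; rewrite !inE => /andP[kC kB] ->; exists k; first by rewrite inE kB (negbNE kC).
by congr X; sx.
Qed.

Lemma ISO n : forall B C : {set I}, #|B :\: C| + #|C :\: B| = n -> d (X B) (X C) = n.
Proof.
elim: n {-2}n (leqnn n) => [|N IH] n Hn B C Hbc.
  have -> : n = 0%N by lia.
  move: Hbc; have -> : n = 0%N by lia.
  move/eqP; rewrite addn_eq0 !cards_eq0 !setD_eq0 => /andP[BC CB].
  by rewrite (Hc BC); apply/eqP; rewrite cards_eq0 setD_eq0.
case: (boolP (B \subset C)) => [BC|nBC].
  by rewrite Hc //; move: Hbc; rewrite (eqP (_ : B :\: C == set0)) ?cards0 ?setD_eq0.
case: (boolP (C \subset B)) => [CB|nCB].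
  by rewrite dist_sym Hc //; move: Hbc; rewrite (eqP (_ : C :\: B == set0)) ?cards0 ?addn0 ?setD_eq0.
have [k kBC] : exists k, k \in B :\: C by apply/set0Pn; rewrite setD_eq0.
have [l lCB] : exists l, l \in C :\: B by apply/set0Pn; rewrite setD_eq0.
set a := #|B :\: C| in Hbc; set b := #|C :\: B| in Hbc.
have a1 : (0 < a)%N by rewrite /a card_gt0; apply/set0Pn; exists k.
have b1 : (0 < b)%N by rewrite /b card_gt0; apply/set0Pn; exists l.
set S := B :&: C.
have SB : S \subset B by apply: subsetIl.
have SC : S \subset C by apply: subsetIr.
have dSB : d (X S) (X B) = a by rewrite Hc //; rewrite /S; csx.
have dSC : d (X S) (X C) = b by rewrite Hc //; rewrite /S; csx.
have kB : k \in B by move: kBC; rewrite inE => /andP[].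
have kC : k \notin C by move: kBC; rewrite inE => /andP[].
have dk : d (X (B :\ k)) (X C) = (a + b).-1.
  apply: (IH (a + b).-1); first by lia.
  rewrite setD1D card_D1 // (_ : #|C :\: (B :\ k)| = b); first by rewrite -/a; clear -a1; lia.
  by rewrite /b; csx; rewrite (negbTE kC).
have dBk : d (X B) (X (B :\ k)) = 1%N by rewrite dist_sym Hc ?subD1set // setDD1 // cards1.
have lo : ((a + b).-2 <= d (X B) (X C))%N.
  by have := dist_tri (X (B :\ k)) (X B) (X C); rewrite (dist_sym _ (X B)) dBk dk; lia.
have up : (d (X B) (X C) <= a + b)%N.
  by have := dist_tri (X B) (X S) (X C); rewrite (dist_sym (X B) (X S)) dSB dSC.
have par : odd (d (X B) (X C)) = odd (a + b).
  by rewrite (dist_parity (X B) (X S) (X C)) (dist_sym (X B) (X S)) dSB dSC.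
have [E|E] : d (X B) (X C) = (a + b)%N \/ d (X B) (X C) = (a + b).-2.
  by apply: par3 => //; clear -a1 b1; lia.
  by rewrite -Hbc.
exfalso.
case: (med_ex (X S) (X B) (X C)) => m [m1 m2 m3].
rewrite dSB dSC E in m1 m2 m3.
rewrite (dist_sym (X B) m) in m3.
have dSm : d (X S) m = 1%N by clear -m1 m2 m3 a1 b1; lia.
have [k' k'BS Hk'] : exists2 k', k' \in B :\: S & m = X (k' |: S).
  apply: INb => //; first by rewrite e_sym; apply: dist1_edge.
  rewrite (_ : #|B :\: S| = a); first by clear -m1 m2 m3 a1 b1 dSm; lia.
  by rewrite /S; csx.
have [l' l'CS Hl'] : exists2 l', l' \in C :\: S & m = X (l' |: S).
  apply: INb => //; first by rewrite e_sym; apply: dist1_edge.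
  rewrite (_ : #|C :\: S| = b); first by clear -m1 m2 m3 a1 b1 dSm; lia.
  by rewrite /S; csx.
move: k'BS l'CS; rewrite /S !inE => /andP[/nandP k'1 k'2] /andP[/nandP l'1 l'2].
have k'C : k' \notin C by case: k'1 => //; rewrite k'2.
have l'B : l' \notin B by case: l'1 => //; rewrite l'2.
have : X (k' |: S) != X (l' |: S).
  apply: Hl; rewrite /S ?inE ?k'2 ?l'2 ?(negbTE k'C) ?(negbTE l'B) ?andbF //.
  by apply: contraNneq k'C => ->.
by rewrite -Hk' -Hl' eqxx.
Qed.

End Cube2.
Lemma D1C (I : finType) (B : {set I}) k j : B :\ k :\ j = B :\ j :\ k.
Proof. by sx. Qed.

Definition sd (I : finType) (B C : {set I}) := [set x | (x \in B) (+) (x \in C)].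
Definition ham (I : finType) (B C : {set I}) := #|sd B C|.

Lemma hamE (I : finType) (B C : {set I}) : ham B C = (#|B :\: C| + #|C :\: B|)%N.
Proof.
rewrite /ham (_ : sd B C = (B :\: C) :|: (C :\: B)); last first.
  by apply/setP => x; rewrite !inE; case: (x \in B); case: (x \in C).
rewrite cardsU (_ : (B :\: C) :&: (C :\: B) = set0) ?cards0 ?subn0 //.
by apply/setP => x; rewrite !inE; case: (x \in B); case: (x \in C).
Qed.

Lemma sd_shift (I : finType) (B C B0 : {set I}) : sd (sd B B0) (sd C B0) = sd B C.
Proof. by apply/setP => x; rewrite !inE; case: (x \in B); case: (x \in C); case: (x \in B0). Qed.

Lemma sdK (I : finType) (B B0 : {set I}) : sd (sd B B0) B0 = B.
Proof. by apply/setP => x; rewrite !inE; case: (x \in B); case: (x \in B0). Qed.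

Lemma sd0 (I : finType) (B : {set I}) : sd set0 B = B.
Proof. by apply/setP => x; rewrite !inE. Qed.

Lemma sdvv (I : finType) (B : {set I}) : sd B B = set0.
Proof. by apply/setP => x; rewrite !inE; case: (x \in B). Qed.

Lemma ham_sym (I : finType) (B C : {set I}) : ham B C = ham C B.
Proof. by rewrite /ham; apply: eq_card => x; rewrite !inE addbC. Qed.

Lemma ham_eq0 (I : finType) (B C : {set I}) : (ham B C == 0%N) = (B == C).
Proof.
rewrite /ham cards_eq0; apply/eqP/eqP => [E|->]; last by rewrite sdvv.
apply/setP => x; move/setP: E => /(_ x); rewrite !inE.
by case: (x \in B); case: (x \in C).
Qed.

Lemma ham0 (I : finType) (B : {set I}) : ham set0 B = #|B|.
Proof. by rewrite /ham sd0. Qed.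

Lemma hamD1 (I : finType) (B : {set I}) k : k \in B -> ham B (B :\ k) = 1%N.
Proof.
move=> kB; rewrite /ham (_ : sd B (B :\ k) = [set k]) ?cards1 //.
apply/setP => x; rewrite !inE; case: eqP => [->|]; rewrite ?kB //.
by case: (x \in B).
Qed.

Lemma hamU1 (I : finType) (B : {set I}) k : k \notin B -> ham B (k |: B) = 1%N.
Proof.
move=> kB; rewrite /ham (_ : sd B (k |: B) = [set k]) ?cards1 //.
apply/setP => x; rewrite !inE; case: eqP => [->|]; rewrite ?(negbTE kB) //.
by case: (x \in B).
Qed.

Definition icube (I : finType) (Y : {set I} -> T) :=
  injective Y /\ forall B C, e (Y B) (Y C) = (ham B C == 1%N).

Lemma iso_icube (I : finType) (Y : {set I} -> T) : Hcomp Y -> HLI Y ->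
  icube Y /\ forall B C, dist (Y B) (Y C) = ham B C.
Proof.
move=> Hc Hl.
have D B C : dist (Y B) (Y C) = ham B C by rewrite hamE (ISO Hc Hl (erefl _)).
split => //; split => [B C E|B C]; last by rewrite edge_dist D.
by apply/eqP; rewrite -ham_eq0 -D E dist0.
Qed.

Section Graded.
Variable z : T.
Local Notation d := dist.
Local Notation h := (dist z).

Lemma graded_Hcomp (I : finType) (X : {set I} -> T) H :
  (forall B, h (X B) + #|B| = H) ->
  (forall (B : {set I}) k, k \notin B -> e (X B) (X (k |: B))) -> Hcomp X.
Proof.
move=> Hg He B C BC; apply/eqP; rewrite eqn_leq; apply/andP; split.
  suff U : forall n (C : {set I}), B \subset C -> #|C :\: B| = n -> (d (X B) (X C) <= n)%N by apply: U.
  clear C BC; elim => [|n IH] C BC Hn.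
    move/eqP: Hn; rewrite cards_eq0 setD_eq0 => CB.
    by rewrite (_ : C = B) ?dist0 //; apply/eqP; rewrite eqEsubset CB BC.
  have [k kCB] : exists k, k \in C :\: B by apply/set0Pn; rewrite -cards_eq0 Hn.
  have kC : k \in C by move: kCB; rewrite inE => /andP[].
  have kB : k \notin B by move: kCB; rewrite inE => /andP[].
  have BCk : B \subset C :\ k.
    by apply/subsetP => x xB; rewrite !inE (subsetP BC _ xB) andbT; apply: contraNneq kB => <-.
  have Hn' : #|(C :\ k) :\: B| = n by rewrite setD1D card_D1 // Hn.
  have E : C = k |: (C :\ k) by rewrite setD1K.
  have ed : d (X (C :\ k)) (X C) = 1%N.
    by apply: dist_edge; rewrite {2}E; apply: He; rewrite !inE eqxx.
  by have := dist_tri (X B) (X (C :\ k)) (X C); rewrite ed addn1; move/leq_trans; apply; apply: (IH _ BCk Hn').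
have := dist_tri z (X C) (X B); rewrite (dist_sym (X C)).
have := Hg B; have := Hg C; rewrite cardsDS //.
have := subset_leq_card BC; lia.
Qed.

Section Build.
Variables (n : nat) (v : T) (a : 'I_n -> T).
Hypothesis a_inj : injective a.
Hypothesis Ha : forall k, e v (a k).
Hypothesis Hh : forall k, (h (a k)).+1 = h v.
Implicit Types (B : {set 'I_n}).

Definition sq (x y : T) : T := odflt x [pick c | [&& e x c, e y c & (h c).+1 == h x]].

Lemma sqP x y t : x != y -> e t x -> e t y -> (h x).+1 = h t -> h y = h x ->
  [/\ e x (sq x y), e y (sq x y) & (h (sq x y)).+1 = h x].
Proof.
move=> xy tx ty Hx Hy; rewrite /sq; case: pickP => [c /and3P[? ? /eqP ?] //|none].
have [c [xc yc Hc]] := square (z := z) tx ty xy (esym Hy) Hx.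
by move: (none c); rewrite xc yc Hc eqxx.
Qed.

Fixpoint Xf (m : nat) (B : {set 'I_n}) : T :=
  match m with
  | 0 => v
  | m'.+1 => match [pick k in B] with
             | None => v
             | Some k => match [pick j in B :\ k] with
                         | None => a k
                         | Some j => sq (Xf m' (B :\ k)) (Xf m' (B :\ j))
                         end
             end
  end.

Definition Xc B := Xf #|B| B.

Lemma Xc0 : Xc set0 = v.
Proof. by rewrite /Xc cards0. Qed.

Lemma Xc1 k : Xc [set k] = a k.
Proof.
rewrite /Xc cards1 /=; case: pickP => [k' | none]; last by move: (none k); rewrite set11.
rewrite inE => /eqP ->; case: pickP => [j|//]; by rewrite !inE andNb.
Qed.

Lemma Xc2 B : (1 < #|B|)%N -> exists k j, [/\ k \in B, j \in B, k != j &
  Xc B = sq (Xc (B :\ k)) (Xc (B :\ j))].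
Proof.
rewrite /Xc; case E: #|B| => [|m] // m1 /=.
case: pickP => [k kB | none]; last first.
  have : (0 < #|B|)%N by rewrite E.
  by rewrite card_gt0 => /set0Pn [x xB]; move: (none x); rewrite xB.
case: pickP => [j jBk | none]; last first.
  have : (0 < #|B :\ k|)%N by rewrite card_D1 // E.
  by rewrite card_gt0 => /set0Pn [x xB]; move: (none x); rewrite xB.
move: (jBk); rewrite !inE => /andP[jk jB].
exists k, j; split => //; first by rewrite eq_sym.
by rewrite !card_D1 // E.
Qed.

Definition Pinv m := forall B, #|B| = m -> [/\ h (Xc B) + m = h v,
  (forall k, k \in B -> e (Xc (B :\ k)) (Xc B)) &
  (forall k j, k \in B -> j \in B -> k != j -> Xc (B :\ k) != Xc (B :\ j))].

Lemma Pinv_all m : Pinv m.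
Proof.
suff S : forall N m, (m <= N)%N -> Pinv m by apply: (S m).
elim => [|N IH] {}m Hm; rewrite /Pinv => B HB.
  have m0 : m = 0%N by lia.
  rewrite m0; rewrite m0 in HB; move/eqP: HB; rewrite cards_eq0 => /eqP ->; rewrite Xc0 addn0.
  by split => // k; rewrite inE.
case: m Hm HB => [|[|m]] Hm HB.
- move/eqP: HB; rewrite cards_eq0 => /eqP ->; rewrite Xc0 addn0.
  by split => // k; rewrite inE.
- move/eqP/cards1P: HB => [k ->]; rewrite Xc1; split.
  + by rewrite addn1.
  + by move=> k'; rewrite inE => /eqP ->; rewrite setDv Xc0 Ha.
  + by move=> k1 k2; rewrite !inE => /eqP -> /eqP ->; rewrite eqxx.
have IH1 := IH m.+1 (ltac:(lia)); have IH2 := IH m (ltac:(lia)).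
have Hd : forall k j, k \in B -> j \in B -> k != j -> Xc (B :\ k) != Xc (B :\ j).
  move=> k j kB jB kj.
  case: m Hm IH1 IH2 HB => [|m] Hm IH1 IH2 HB.
    have E : B = [set k; j].
      apply/eqP; rewrite eq_sym eqEcard HB cards2 kj andbT.
      by apply/subsetP => x; rewrite !inE => /orP[] /eqP ->.
    rewrite E (_ : [set k; j] :\ k = [set j]); last by sx; rewrite eq_sym.
    rewrite (_ : [set k; j] :\ j = [set k]); last by sx.
    by rewrite !Xc1; apply: contra kj => /eqP /a_inj ->.
  have [l [lB lk lj]] : exists l, [/\ l \in B, l != k & l != j].
    have : (0 < #|B :\ k :\ j|)%N by rewrite card_D1 ?card_D1 ?HB // !inE eq_sym kj.
    rewrite card_gt0 => /set0Pn [l]; rewrite !inE => /and3P[lj lk lB].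
    by exists l.
  apply/eqP => Eu.
  have jk : j != k by rewrite eq_sym.
  have kl : k != l by rewrite eq_sym.
  have jl : j != l by rewrite eq_sym.
  set u := Xc (B :\ k).
  have IH3 := IH m (ltac:(lia)).
  have Bk : #|B :\ k| = m.+2 by rewrite card_D1 // HB.
  have Bj : #|B :\ j| = m.+2 by rewrite card_D1 // HB.
  have Bl : #|B :\ l| = m.+2 by rewrite card_D1 // HB.
  have Bkj : #|B :\ k :\ j| = m.+1 by rewrite card_D1 ?Bk // !inE eq_sym kj.
  have Bkl : #|B :\ k :\ l| = m.+1 by rewrite card_D1 ?Bk // !inE lk.
  have Bjl : #|B :\ j :\ l| = m.+1 by rewrite card_D1 ?Bj // !inE lj.
  have Bkjl : #|B :\ k :\ j :\ l| = m by rewrite card_D1 ?Bkj // !inE lj lk.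
  case: (IH1 _ Bk) => hu eu du.
  case: (IH1 _ Bj) => _ ej dj.
  case: (IH1 _ Bl) => _ el dl.
  case: (IH2 _ Bkj) => htkj ekj _.
  case: (IH2 _ Bkl) => htkl ekl _.
  case: (IH2 _ Bjl) => htjl ejl _.
  case: (IH3 _ Bkjl) => hs _ _.
  have e1 : e (Xc (B :\ k :\ j)) u by apply: eu; rewrite !inE eq_sym kj.
  have e2 : e (Xc (B :\ k :\ l)) u by apply: eu; rewrite !inE lk.
  have e3 : e (Xc (B :\ j :\ l)) u by rewrite /u Eu; apply: ej; rewrite !inE lj.
  have f1 : e (Xc (B :\ k :\ j :\ l)) (Xc (B :\ k :\ j)) by apply: ekj; rewrite !inE lj lk.
  have f2 : e (Xc (B :\ k :\ j :\ l)) (Xc (B :\ k :\ l)).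
    by rewrite (D1C (B :\ k)); apply: ekl; rewrite !inE eq_sym lj eq_sym kj.
  have f3 : e (Xc (B :\ k :\ j :\ l)) (Xc (B :\ j :\ l)).
    by rewrite (D1C B k j) (D1C (B :\ j) k l); apply: ejl; rewrite !inE kB (eq_sym k l) lk kj.
  have n12 : Xc (B :\ k :\ j) != Xc (B :\ k :\ l).
    by apply: du; rewrite ?inE ?kj ?lk ?lj ?kB ?jB ?lB ?jk ?kl ?jl.
  have n13 : Xc (B :\ k :\ j) != Xc (B :\ j :\ l).
    by rewrite (D1C B k j); apply: dj; rewrite ?inE ?kj ?lk ?lj ?kB ?jB ?lB ?jk ?kl ?jl.
  have n23 : Xc (B :\ k :\ l) != Xc (B :\ j :\ l).
    by rewrite (D1C B k l) (D1C B j l); apply: dl; rewrite ?inE ?kj ?lk ?lj ?kB ?jB ?lB ?jk ?kl ?jl.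
  apply: (K23 (x1 := u) (x2 := Xc (B :\ k :\ j :\ l)) _ n12 n13 n23).
  - apply/eqP => E; have H1 := congr1 (dist z) E; rewrite /u in H1.
    by clear -H1 hu hs; lia.
  - by rewrite e_sym.
  - by rewrite e_sym.
  - by rewrite e_sym.
  - exact: f1.
  - exact: f2.
  - exact: f3.
  - by apply: (nonadj (w := z)); clear -htkj htkl; lia.
  - by apply: (nonadj (w := z)); clear -htkj htjl; lia.
  - by apply: (nonadj (w := z)); clear -htjl htkl; lia.
have B2 : (1 < #|B|)%N by rewrite HB.
have [k0 [j0 [k0B j0B k0j0 EX]]] := Xc2 B2.
have Bk : #|B :\ k0| = m.+1 by rewrite card_D1 // HB.
have Bj : #|B :\ j0| = m.+1 by rewrite card_D1 // HB.
have Bkj : #|B :\ k0 :\ j0| = m by rewrite card_D1 ?Bk // !inE eq_sym k0j0.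
case: (IH1 _ Bk) => hu1 eu1 du1.
case: (IH1 _ Bj) => hu2 eu2 du2.
case: (IH2 _ Bkj) => ht _ _.
set u1 := Xc (B :\ k0) in hu1 eu1 du1 EX *.
set u2 := Xc (B :\ j0) in hu2 eu2 du2 EX *.
set t := Xc (B :\ k0 :\ j0) in ht.
have tu1 : e t u1 by apply: eu1; rewrite !inE eq_sym k0j0.
have tu2 : e t u2 by rewrite /t D1C; apply: eu2; rewrite !inE k0j0.
have u12 : u1 != u2 by apply: Hd.
have [c1 c2 c3] := sqP u12 tu1 tu2 (ltac:(clear -hu1 ht; lia)) (ltac:(clear -hu1 hu2; lia)).
rewrite -EX in c1 c2 c3.
split => //.
  by clear -c3 hu1; lia.
move=> l lB.
case: (eqVneq l k0) => [->|lk0] //.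
case: (eqVneq l j0) => [->|lj0] //.
have Bl : #|B :\ l| = m.+1 by rewrite card_D1 // HB.
case: (IH1 _ Bl) => hu3 eu3 du3.
set u3 := Xc (B :\ l) in hu3 eu3 du3 *.
have Bkl : #|B :\ k0 :\ l| = m by rewrite card_D1 ?Bk // !inE lk0.
have Bjl : #|B :\ j0 :\ l| = m by rewrite card_D1 ?Bj // !inE lj0.
case: (IH2 _ Bkl) => ht2 _ _; case: (IH2 _ Bjl) => ht3 _ _.
have t2u1 : e (Xc (B :\ k0 :\ l)) u1 by apply: eu1; rewrite !inE lk0.
have t2u3 : e (Xc (B :\ k0 :\ l)) u3 by rewrite D1C; apply: eu3; rewrite !inE eq_sym lk0.
have t3u2 : e (Xc (B :\ j0 :\ l)) u2 by apply: eu2; rewrite !inE lj0.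
have t3u3 : e (Xc (B :\ j0 :\ l)) u3 by rewrite D1C; apply: eu3; rewrite !inE eq_sym lj0.
have u13 : u1 != u3 by apply: Hd; rewrite // eq_sym.
have u23 : u2 != u3 by apply: Hd; rewrite // eq_sym.
have d12 : d u1 u2 = 2 by apply: (dist2 (w := z) (x := t)) => //; clear -hu1 hu2; lia.
have d13 : d u1 u3 = 2 by apply: (dist2 (w := z) (x := Xc (B :\ k0 :\ l))) => //; clear -hu1 hu3; lia.
have d23 : d u2 u3 = 2 by apply: (dist2 (w := z) (x := Xc (B :\ j0 :\ l))) => //; clear -hu3 hu2; lia.
case: (med_ex u1 u2 u3) => mm [m1 m2 m3].
rewrite d12 d13 d23 (dist_sym u1 mm) (dist_sym u2 mm) in m1 m2 m3.
have g1 : e u1 mm by apply: dist1_edge; rewrite dist_sym; clear -m1 m2 m3; lia.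
have g2 : e u2 mm by apply: dist1_edge; rewrite dist_sym; clear -m1 m2 m3; lia.
have g3 : e u3 mm by apply: dist1_edge; rewrite dist_sym; clear -m1 m2 m3; lia.
case: (edge_step z g1) => hm.
  have E1 : mm = t.
    apply: (upper_uniq (z := z) u12 g1 g2); rewrite 1?e_sym //; clear -hm ht hu1 hu2; lia.
  have E2 : mm = Xc (B :\ k0 :\ l).
    apply: (upper_uniq (z := z) u13 g1 g3); rewrite 1?e_sym //; clear -hm ht2 hu1 hu3; lia.
  have j0l : j0 != l by rewrite eq_sym.
  have j0k0 : j0 != k0 by rewrite eq_sym.
  have : t != Xc (B :\ k0 :\ l).
    by apply: du1 => //; rewrite !inE ?k0j0 ?lk0 ?j0B ?lB ?j0k0 ?j0l.
  by rewrite -E1 -E2 eqxx.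
have E : mm = Xc B.
  apply: (lower_uniq (z := z) u12) => //; clear -hm hu1 hu2; lia.
by rewrite -E.
Qed.

Lemma Xc_h B : h (Xc B) + #|B| = h v.
Proof. by case: (@Pinv_all #|B| B erefl). Qed.

Lemma Xc_edge B k : k \notin B -> e (Xc B) (Xc (k |: B)).
Proof.
move=> kB; case: (@Pinv_all #|k |: B| (k |: B) erefl) => _ E _.
by have := E k (setU11 k B); rewrite setU1K.
Qed.

Lemma Xc_HLI : HLI Xc.
Proof.
move=> B k j kB jB kj; set C := k |: (j |: B).
case: (@Pinv_all #|C| C erefl) => _ _ D.
have jC : j \in C by rewrite !inE eqxx orbT.
have kC : k \in C by rewrite !inE eqxx.
have jk : j != k by rewrite eq_sym.
have := D j k jC kC jk.
rewrite (_ : C :\ j = k |: B); last by rewrite /C; sx; rewrite (negbTE jB).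
rewrite (_ : C :\ k = j |: B); last by rewrite /C; sx; rewrite (negbTE kB).
by rewrite eq_sym.
Qed.

Lemma Xc_icube : icube Xc /\ forall B C, dist (Xc B) (Xc C) = ham B C.
Proof. exact: iso_icube (graded_Hcomp Xc_h Xc_edge) Xc_HLI. Qed.
End Build.
Lemma icube_shift (I : finType) (Y : {set I} -> T) B0 : icube Y -> icube (fun B => Y (sd B B0)).
Proof.
case=> Yi Ye; split => [B C /Yi E|B C]; last by rewrite Ye /ham sd_shift.
by rewrite -(sdK B B0) E sdK.
Qed.

Lemma graded_top (I : finType) (Y : {set I} -> T) : icube Y ->
  (forall B, h (Y B) <= h (Y set0))%N -> forall B, h (Y B) + #|B| = h (Y set0).
Proof.
case=> Yi Ye Hmax.
suff S : forall N (B : {set I}), (#|B| <= N)%N -> h (Y B) + #|B| = h (Y set0).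
  by move=> B; apply: (S #|B|).
elim => [|N IH] B HB.
  by move: HB; rewrite leqn0 cards_eq0 => /eqP ->; rewrite cards0 addn0.
case E: #|B| => [|[|m]].
- by move/eqP: E; rewrite cards_eq0 => /eqP ->; rewrite addn0.
- move/eqP/cards1P: E => [k ->].
  have ed : e (Y set0) (Y [set k]) by rewrite Ye ham0 cards1.
  by have := Hmax [set k]; case: (edge_step z ed) => -> ; lia.
have [k kB] : exists k, k \in B by apply/set0Pn; rewrite -cards_eq0 E.
have [l lB] : exists l, l \in B :\ k by apply/set0Pn; rewrite -cards_eq0 card_D1 // E.
have lk : l != k by move: lB; rewrite !inE => /andP[].
have lB' : l \in B by move: lB; rewrite !inE => /andP[].
have Ek : #|B :\ k| = m.+1 by rewrite card_D1 // E.
have El : #|B :\ l| = m.+1 by rewrite card_D1 // E.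
have Ekl : #|B :\ k :\ l| = m by rewrite card_D1 // Ek.
have h1 := IH (B :\ k) (ltac:(rewrite Ek; lia)).
have h2 := IH (B :\ l) (ltac:(rewrite El; lia)).
have h3 := IH (B :\ k :\ l) (ltac:(rewrite Ekl; lia)).
rewrite Ek in h1; rewrite El in h2; rewrite Ekl in h3.
have e1 : e (Y (B :\ k)) (Y B) by rewrite Ye ham_sym hamD1.
have e2 : e (Y (B :\ l)) (Y B) by rewrite Ye ham_sym hamD1.
have e3 : e (Y (B :\ k)) (Y (B :\ k :\ l)) by rewrite Ye hamD1.
have e4 : e (Y (B :\ l)) (Y (B :\ k :\ l)) by rewrite Ye D1C hamD1 // !inE eq_sym lk.
have n12 : Y (B :\ k) != Y (B :\ l).
  apply/eqP => /Yi /setP /(_ l); rewrite !inE eqxx lk lB' /=; done.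
case: (edge_step z e1) => H.
  have E2 : Y B = Y (B :\ k :\ l).
    apply: (upper_uniq (z := z) n12 e1 e2 e3 e4); clear -H h1 h2 h3; lia.
  by move/Yi/setP: E2 => /(_ k); rewrite !inE eqxx kB andbF.
clear -H h1; lia.
Qed.

Lemma icube_Hcomp (I : finType) (Y : {set I} -> T) : icube Y ->
  (forall B, h (Y B) <= h (Y set0))%N -> Hcomp Y /\ HLI Y.
Proof.
move=> HY Hmax; have Hg := graded_top HY Hmax; case: HY => Yi Ye.
split; first by apply: (graded_Hcomp Hg) => B k kB; rewrite Ye hamU1.
move=> B k j kB jB kj; apply/eqP => /Yi /setP /(_ k); rewrite !inE eqxx (negbTE kB) (negbTE kj).
done.
Qed.

Lemma icube_dist (I : finType) (Y : {set I} -> T) : icube Y ->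
  forall B C, dist (Y B) (Y C) = ham B C.
Proof.
move=> HY.
pose B0 := [arg max_(B > set0) h (Y B)].
have Hmax : forall B, (h (Y B) <= h (Y B0))%N.
  by rewrite /B0; case: arg_maxnP => // B1 _ H B; apply: H.
pose Y' := fun B => Y (sd B B0).
have HY' : icube Y' := icube_shift B0 HY.
have Hmax' : forall B, (h (Y' B) <= h (Y' set0))%N by move=> B; rewrite /Y' sd0.
case: (icube_Hcomp HY' Hmax') => Hc Hl.
case: (iso_icube Hc Hl) => _ D B C.
by have := D (sd B B0) (sd C B0); rewrite /Y' !sdK /ham sd_shift.
Qed.
End Graded.
Section Conv.
Variable i : nat.
Definition tos (p : {ffun 'I_i -> bool}) : {set 'I_i} := [set k | p k].
Definition tof (B : {set 'I_i}) : {ffun 'I_i -> bool} := [ffun k => k \in B].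
Lemma tosK B : tos (tof B) = B.
Proof. by apply/setP => k; rewrite !inE ffunE. Qed.
Lemma tofK p : tof (tos p) = p.
Proof. by apply/ffunP => k; rewrite !ffunE inE. Qed.
Lemma qadjE p q : qadj p q = (ham (tos p) (tos q) == 1%N).
Proof.
rewrite /qadj /ham; congr (_ == _); apply: eq_card => k; rewrite !inE.
by case: (p k); case: (q k).
Qed.

Lemma cube_setE (S : {set T}) : induces_cube e i S <->
  exists Y : {set 'I_i} -> T, icube Y /\ S = Y @: setT.
Proof.
split.
  move/existsP => [f /and3P [/injectiveP fi /eqP fS /forallP fe]].
  exists (fun B => f (tof B)); split; first split.
  - by move=> B C /fi E; rewrite -(tosK B) E tosK.
  - by move=> B C; move/forallP: (fe (tof B)) => /(_ (tof C)) /eqP ->; rewrite qadjE !tosK.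
  - rewrite -fS; apply/setP => y; apply/imsetP/imsetP => [[p _ ->]|[B _ ->]].
      by exists (tos p) => //; rewrite tofK.
    by exists (tof B).
move=> [Y [[Yi Ye] ->]]; apply/existsP; exists [ffun p => Y (tos p)].
apply/and3P; split.
- apply/injectiveP => p q; rewrite !ffunE => /Yi E.
  by rewrite -(tofK p) E tofK.
- apply/eqP/setP => y; apply/imsetP/imsetP => [[p _ ->]|[B _ ->]].
    by exists (tos p); rewrite ?ffunE.
  by exists (tof B) => //; rewrite ffunE tosK.
- by apply/forallP => p; apply/forallP => q; rewrite !ffunE Ye qadjE.
Qed.
End Conv.

Lemma nbr_set (I : finType) (Y : {set I} -> T) : icube Y ->
  [set y in Y @: setT | e (Y set0) y] = [set Y [set k] | k : I].
Proof.
case=> Yi Ye; apply/setP => y; rewrite inE; apply/andP/imsetP.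
  case=> /imsetP [B _ ->]; rewrite Ye ham0 => /cards1P [k ->].
  by exists k.
case=> k _ ->; split; first by apply/imsetP; exists [set k].
by rewrite Ye ham0 cards1.
Qed.

Section Count.
Variable z : T.
Local Notation h := (dist z).

Definition Dn v := [set a | e v a && ((h a).+1 == h v)].
Definition isTop (S : {set T}) x := (x \in S) && [forall y in S, h y <= h x].
Definition top S := odflt z [pick x | isTop S x].
Definition Phi S := (top S, [set y in S | e (top S) y]).
Definition PP i := [set p : T * {set T} | (p.2 \subset Dn p.1) && (#|p.2| == i)].
Definition CS i := [set S : {set T} | induces_cube e i S].

Lemma top_ex (I : finType) (Y : {set I} -> T) S : S = Y @: setT ->
  exists B0, top S = Y B0 /\ forall B, (h (Y B) <= h (Y B0))%N.
Proof.
move=> ->; rewrite /top; case: pickP => [x /andP[/imsetP[B0 _ ->] /forall_inP Hx]|none].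
  exists B0; split => // B; apply: Hx; exact: imset_f.
exfalso; pose B1 := [arg max_(B > set0) h (Y B)].
have : isTop (Y @: setT) (Y B1).
  rewrite /isTop imset_f //=; apply/forall_inP => y /imsetP [B _ ->].
  by rewrite /B1; case: arg_maxnP => // B2 _ H; apply: H.
by rewrite none.
Qed.

Lemma graded_shift (I : finType) (Y : {set I} -> T) B0 : icube Y ->
  (forall B, (h (Y B) <= h (Y B0))%N) ->
  [/\ icube (fun B => Y (sd B B0)), (fun B => Y (sd B B0)) @: setT = Y @: setT &
      forall B, h (Y (sd B B0)) + #|B| = h (Y B0)].
Proof.
move=> HY Hmax; have HY' := icube_shift B0 HY.
split => //.
  apply/setP => y; apply/imsetP/imsetP => [[B _ ->]|[B _ ->]]; first by exists (sd B B0).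
  by exists (sd B B0) => //; rewrite sdK.
move=> B; have := graded_top (z := z) HY'; rewrite /= sd0; apply => B'; apply: Hmax.
Qed.

Lemma Phi_in i S : S \in CS i -> Phi S \in PP i.
Proof.
rewrite inE => /cube_setE [Y [HY SE]].
have [B0 [Et Hmax]] := top_ex SE.
case: (graded_shift HY Hmax) => HY' Y'im Hg.
have N := nbr_set HY'; rewrite /= sd0 Y'im -SE -Et in N.
rewrite /Phi inE /= N; apply/andP; split.
  apply/subsetP => y /imsetP [k _ ->]; rewrite inE Et.
  have := Hg [set k]; rewrite cards1 addn1 => ->; rewrite eqxx andbT.
  by case: HY' => _ /(_ set0 [set k]); rewrite /= sd0 ham0 cards1.
rewrite card_imset ?card_ord //.
by move=> k l /(proj1 HY') /set1_inj.
Qed.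

Lemma incl_cube (I : finType) (Y1 Y2 : {set I} -> T) : icube Y1 -> icube Y2 ->
  Y1 set0 = Y2 set0 ->
  (forall B, h (Y1 B) + #|B| = h (Y1 set0)) ->
  (forall B, h (Y2 B) + #|B| = h (Y2 set0)) ->
  (forall k, exists C, Y1 [set k] = Y2 C) ->
  forall B, exists C, Y1 B = Y2 C.
Proof.
move=> [Y1i Y1e] [Y2i Y2e] E0 G1 G2 H1.
suff S : forall N (B : {set I}), (#|B| <= N)%N -> exists C, Y1 B = Y2 C.
  by move=> B; apply: (S #|B|).
elim => [|N IH] B HB.
  by move: HB; rewrite leqn0 cards_eq0 => /eqP ->; exists set0.
case E: #|B| => [|[|m]].
- by move/eqP: E; rewrite cards_eq0 => /eqP ->; exists set0.
- by move/eqP/cards1P: E => [k ->]; apply: H1.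
have [k kB] : exists k, k \in B by apply/set0Pn; rewrite -cards_eq0 E.
have [l lB] : exists l, l \in B :\ k by apply/set0Pn; rewrite -cards_eq0 card_D1 // E.
have lk : l != k by move: lB; rewrite !inE => /andP[].
have lB' : l \in B by move: lB; rewrite !inE => /andP[].
have Ek : #|B :\ k| = m.+1 by rewrite card_D1 // E.
have El : #|B :\ l| = m.+1 by rewrite card_D1 // E.
have Ekl : #|B :\ k :\ l| = m by rewrite card_D1 // Ek.
have [C1 E1] := IH (B :\ k) (ltac:(rewrite Ek; lia)).
have [C2 E2] := IH (B :\ l) (ltac:(rewrite El; lia)).
have [C3 E3] := IH (B :\ k :\ l) (ltac:(rewrite Ekl; lia)).
have cC : forall C B', Y1 B' = Y2 C -> #|C| = #|B'|.
  move=> C B' EC; have := G1 B'; have := G2 C; rewrite EC -E0; clear; lia.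
have c1 := cC _ _ E1; have c2 := cC _ _ E2; have c3 := cC _ _ E3.
rewrite Ek in c1; rewrite El in c2; rewrite Ekl in c3.
have a31 : ham C3 C1 = 1%N.
  by apply/eqP; rewrite -Y2e -E1 -E3 Y1e ham_sym hamD1.
have a32 : ham C3 C2 = 1%N.
  by apply/eqP; rewrite -Y2e -E2 -E3 Y1e ham_sym D1C hamD1 // !inE eq_sym lk.
have step : forall C, ham C3 C = 1%N -> #|C| = m.+1 -> exists2 x, x \notin C3 & C = x |: C3.
  move=> C hC cC'; move: hC; rewrite hamE.
  have := cardsID C3 C; have := cardsID C C3; rewrite setIC.
  move=> i1 i2 hs.
  have : #|C3 :\: C| = 0%N by clear -i1 i2 hs c3 cC'; lia.
  move/eqP; rewrite cards_eq0 setD_eq0 => sub.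
  have : #|C :\: C3| = 1%N by clear -i1 i2 hs c3 cC'; lia.
  move/eqP/cards1P => [x Hx]; exists x.
    by apply/negP => xC3; move/setP: Hx => /(_ x); rewrite !inE xC3 eqxx.
  apply/setP => y; rewrite !inE; move/setP: Hx => /(_ y); rewrite !inE.
  case: (eqVneq y x) => [->|yx] /=; first by case: (x \in C3) => //= ->.
  by case yC3: (y \in C3) => /=; [rewrite (subsetP sub _ yC3) | move=> ->].
have [x1 x1C3 EC1] := step C1 a31 c1.
have [x2 x2C3 EC2] := step C2 a32 c2.
have n12 : Y2 C1 != Y2 C2.
  rewrite -E1 -E2; apply/eqP => /Y1i /setP /(_ l); rewrite !inE eqxx lk lB' /=; done.
have x12 : x1 != x2 by apply: contraNneq n12 => e12; rewrite EC1 EC2 e12.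
set C := x1 |: (x2 |: C3).
have x2C1 : x2 \notin C1 by rewrite EC1 !inE negb_or eq_sym x12.
have x1C2 : x1 \notin C2 by rewrite EC2 !inE negb_or x12.
have eC1 : e (Y2 C1) (Y2 C).
  by rewrite Y2e (_ : C = x2 |: C1) ?hamU1 // /C EC1; sx.
have eC2 : e (Y2 C2) (Y2 C) by rewrite Y2e (_ : C = x1 |: C2) ?hamU1 // /C EC2.
have cCC : #|C| = m.+2 by rewrite /C -EC2 cardsU1 x1C2 c2.
exists C; apply: (lower_uniq (z := z) n12).
- by rewrite -E1 Y1e ham_sym hamD1.
- by rewrite -E2 Y1e ham_sym hamD1.
- exact: eC1.
- exact: eC2.
- by have := G1 B; have := G1 (B :\ k); rewrite E1 Ek E; clear; lia.
- by have := G2 C; have := G2 C1; rewrite cCC c1; clear; lia.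
- by have := G2 C1; have := G2 C2; rewrite c1 c2; clear; lia.
Qed.
Lemma Phi_sub i S1 S2 : S1 \in CS i -> S2 \in CS i -> Phi S1 = Phi S2 -> S1 \subset S2.
Proof.
rewrite !inE => /cube_setE [Y1 [HY1 SE1]] /cube_setE [Y2 [HY2 SE2]] EP.
have [B1 [Et1 Hm1]] := top_ex SE1; have [B2 [Et2 Hm2]] := top_ex SE2.
case: (graded_shift HY1 Hm1) => HY1' Im1 Hg1.
case: (graded_shift HY2 Hm2) => HY2' Im2 Hg2.
have N1 := nbr_set HY1'; rewrite /= sd0 Im1 -SE1 -Et1 in N1.
have Et : top S1 = top S2 by case: EP.
have EN : [set y in S1 | e (top S1) y] = [set y in S2 | e (top S2) y] by case: EP.
have G1 : forall B, h ((fun B => Y1 (sd B B1)) B) + #|B| = h ((fun B => Y1 (sd B B1)) set0).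
  by move=> B; rewrite /= sd0 Hg1.
have G2 : forall B, h ((fun B => Y2 (sd B B2)) B) + #|B| = h ((fun B => Y2 (sd B B2)) set0).
  by move=> B; rewrite /= sd0 Hg2.
have E0 : (fun B => Y1 (sd B B1)) set0 = (fun B => Y2 (sd B B2)) set0.
  by rewrite /= !sd0 -Et1 -Et2 Et.
have Hn : forall k, exists C, (fun B => Y1 (sd B B1)) [set k] = (fun B => Y2 (sd B B2)) C.
  move=> k /=.
  have : Y1 (sd [set k] B1) \in [set y in S1 | e (top S1) y] by rewrite N1; apply: imset_f.
  rewrite EN inE SE2 => /andP[/imsetP [C _ ->] _].
  by exists (sd C B2); rewrite sdK.
have inc := incl_cube HY1' HY2' E0 G1 G2 Hn.
apply/subsetP => y; rewrite SE1 SE2 => /imsetP [C _ ->].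
have [C' EC] := inc (sd C B1); move: EC; rewrite /= sdK => ->.
exact: imset_f.
Qed.

Lemma Phi_inj i : {in CS i &, injective Phi}.
Proof.
move=> S1 S2 H1 H2 EP; apply/eqP; rewrite eqEsubset.
by rewrite (Phi_sub H1 H2 EP) (Phi_sub H2 H1 (esym EP)).
Qed.

Lemma Phi_onto i p : p \in PP i -> p \in Phi @: CS i.
Proof.
case: p => v A; rewrite inE /= => /andP[AD /eqP HA].
pose a (k : 'I_i) : T := enum_val (cast_ord (esym HA) k).
have a_inj : injective a by move=> k l /enum_val_inj /cast_ord_inj.
have aA k : a k \in A by apply: enum_valP.
have aD k : a k \in Dn v by apply: (subsetP AD).
have Ha k : e v (a k) by move: (aD k); rewrite inE => /andP[].
have Hh k : (h (a k)).+1 = h v by move: (aD k); rewrite inE => /andP[_ /eqP].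
pose X := Xc z v a.
have [HX _] := Xc_icube a_inj Ha Hh.
have Xh := Xc_h a_inj Ha Hh.
set S := X @: setT.
have SC : S \in CS i by rewrite inE; apply/cube_setE; exists X.
apply/imsetP; exists S => //.
have [B0 [Et Hmax]] := top_ex (erefl S).
have B00 : B0 = set0.
  have := Hmax set0; have := Xh B0; rewrite /X Xc0.
  move=> H1 H2; apply/eqP; rewrite -cards_eq0; apply/eqP; clear -H1 H2; lia.
have Tv : top S = v by rewrite Et B00 /X Xc0.
rewrite /Phi Tv; congr pair.
have N := nbr_set HX; rewrite /X Xc0 -/X -/S in N; rewrite N.
apply/setP => x; apply/idP/imsetP => [xA|[k _ ->]]; last by rewrite /X Xc1.
exists (cast_ord HA (enum_rank_in xA x)) => //.
by rewrite /X Xc1 /a cast_ordK enum_rankK_in.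
Qed.

Lemma alpha_count i : alpha e i = \sum_(v : T) 'C(#|Dn v|, i).
Proof.
rewrite /alpha -/(CS i).
rewrite -(card_in_imset (@Phi_inj i)).
rewrite (_ : Phi @: CS i = PP i); last first.
  apply/setP => p; apply/idP/idP => [/imsetP[S SC ->]|]; [exact: Phi_in | exact: Phi_onto].
rewrite -sum1_card.
under [RHS]eq_bigr => v _ do rewrite -cards_draws -sum1_card.
rewrite pair_big_dep /=; apply: eq_bigl => p; rewrite !inE.
by case: p.
Qed.
End Count.
Lemma ham_setT (I : finType) (B : {set I}) : ham setT B = #|~: B|.
Proof. by rewrite /ham; apply: eq_card => x; rewrite !inE. Qed.

Lemma Dn_cube m (Y : {set 'I_m} -> T) (HY : icube Y) C : #|Dn (Y setT) (Y C)| = #|~: C|.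
Proof.
have Dd := icube_dist (Y setT) HY.
have Hc : Hcomp Y.
  move=> B C' BC; rewrite Dd hamE (_ : B :\: C' = set0) ?cards0 //.
  by apply/eqP; rewrite setD_eq0.
have Hl : HLI Y.
  move=> B k j kB jB kj; apply/eqP => /(proj1 HY) /setP /(_ k).
  by rewrite !inE eqxx (negbTE kB) (negbTE kj).
rewrite (_ : Dn (Y setT) (Y C) = [set Y (k |: C) | k in ~: C]).
  rewrite card_in_imset // => k l; rewrite !inE => kC lC /(proj1 HY) /setP /(_ k).
  by rewrite !inE eqxx /= (negbTE kC) orbF => /esym/eqP.
apply/setP => y; rewrite inE; apply/andP/imsetP.
  case=> ey /eqP hy.
  have yC : e y (Y C) by rewrite e_sym.
  have hy' : (dist y (Y setT)).+1 = #|setT :\: C|.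
    rewrite dist_sym hy Dd hamE (_ : C :\: setT = set0) ?cards0 ?addn0 //.
    by apply/setP => x; rewrite !inE.
  have [k kC ->] := INb Hc Hl (subsetT C) yC hy'.
  exists k => //; move: kC; rewrite !inE.
  by case/andP.
case=> k kC ->; rewrite !inE in kC; split.
  by case: HY => _ ->; rewrite hamU1.
rewrite !Dd !ham_setT (cardsD1 k (~: C)) !inE kC add1n; apply/eqP; congr (_.+1).
by apply: eq_card => x; rewrite !inE negb_or.
Qed.

Lemma Dn_z z : Dn z z = set0.
Proof. by apply/setP => a; rewrite !inE dist0 andbF. Qed.

Lemma Dn_nz z v : v != z -> Dn z v != set0.
Proof.
move=> vz; case: (distP v z) => p Hp Sp.
case: p Hp Sp => [|x p] Hp Sp.
  by move: Hp; rewrite /walk /= => /eqP E; rewrite E eqxx in vz.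
move: Hp; rewrite /walk /= => /andP[/andP[vx px] lp].
have dx : (dist x z <= size p)%N by apply: dist_min; rewrite /walk px lp.
apply/set0Pn; exists x; rewrite inE vx /= !(dist_sym z).
case: (edge_step z vx) => E; rewrite !(dist_sym z) in E.
  by move: dx Sp; rewrite E /=; clear; lia.
by rewrite E eqxx.
Qed.

Lemma alpha_pos z d : (0 < \sum_(v : T) 'C(#|Dn z v|, d))%N -> (0 < alpha e d)%N.
Proof. by rewrite (alpha_count z). Qed.

Lemma Dn_alpha z v : (0 < alpha e #|Dn z v|)%N.
Proof.
apply: (alpha_pos (z := z)); rewrite (bigD1 v) //= binn; lia.
Qed.

Lemma alpha0 (z : T) : (0 < alpha e 0)%N.
Proof.
apply: (alpha_pos (z := z)); under eq_bigr => v _ do rewrite bin0.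
by rewrite sum1_card; case: Hmed => [[]].
Qed.

Lemma Dn_le z v : (#|Dn z v| <= cube_dim e)%N.
Proof.
have lt : (#|Dn z v| < #|T|.+1)%N by rewrite ltnS max_card.
rewrite /cube_dim; apply: (@leq_bigmax_cond _ (fun i : 'I_#|T|.+1 => 0 < alpha e i) (fun i => val i) (Ordinal lt)).
exact: Dn_alpha.
Qed.
End Dist.
Import GRing.Theory Num.Theory.
Local Open Scope ring_scope.

Lemma poly_id (T : finType) (N m : nat) (dd : T -> nat) (al : nat -> nat) :
  (forall v, dd v <= m)%N -> (forall v, dd v < N)%N ->
  (forall i, al i = \sum_(v : T) 'C(dd v, i))%N ->
  \poly_(i < N) ((al i)%:R : int) =
  \sum_(i < m.+1) ((#|[set v | dd v == i]|)%:R : int) *: ('X + 1) ^+ i.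
Proof.
move=> Hm HN Hal.
transitivity (\sum_(v : T) ('X + 1 : {poly int}) ^+ dd v).
  rewrite poly_def.
  under eq_bigr => i _ do rewrite Hal natr_sum scaler_suml.
  rewrite exchange_big /=. apply: eq_big => // v _.
  rewrite exprD1n (big_ord_widen N (fun i => 'X^i *+ 'C(dd v, i))) ?HN // [RHS]big_mkcond /=.
  apply: eq_bigr => i _; rewrite scaler_nat; case: ifP => // /negbT; rewrite -leqNgt => lt.
  by rewrite bin_small ?mulr0n.
rewrite (partition_big (fun v => inord (dd v) : 'I_m.+1) xpredT) //=.
apply: eq_bigr => j _.
rewrite scaler_nat.
rewrite (eq_bigr (fun _ => ('X + 1) ^+ j)); last first.
  move=> v /eqP <-; rewrite inordK //; apply: Hm.
rewrite sumr_const; congr (_ *+ _); apply: eq_card => v; rewrite !inE.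
by rewrite unfold_in /= inordK ?ltnS.
Qed.

Unset Implicit Arguments.

Theorem theorem10 (T : finType) (e : rel T)
  (e_sym : symmetric e) (e_irr : irreflexive e)
  (Hmed : median_graph e) :
  exists b : nat -> int,
    b 0%N = 1 /\
    (forall i : nat, (i <= cube_dim e)%N -> 0 < b i) /\
    cube_poly e = \sum_(i < (cube_dim e).+1) b i *: ('X + 1) ^+ i.
Proof.
have [[T0 _] _] := Hmed.
case/card_gt0P: T0 => z0 _.
have am : (0 < alpha e (cube_dim e))%N.
  rewrite /cube_dim.
  have A0 : (0 < #|(fun i : 'I_#|T|.+1 => (0 < alpha e i)%N)|)%N.
    by apply/card_gt0P; exists ord0; rewrite unfold_in /=; apply: (alpha0 e_sym e_irr Hmed z0).
  have [i0 Hi0 E] := @eq_bigmax_cond _ (fun i : 'I_#|T|.+1 => (0 < alpha e i)%N) (fun i => val i) A0.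
  move: Hi0; rewrite unfold_in /= => Hi0.
  by rewrite (_ : \max_(i < #|T|.+1 | (0 < alpha e i)%N) (i : nat) = i0).
have : (0 < #|[set S | induces_cube e (cube_dim e) S]|)%N := am.
case/card_gt0P => S; rewrite inE => /cube_setE [Y [HY _]].
set z := Y setT.
pose b i : int := (#|[set v | #|Dn Hmed z v| == i]|)%:R.
exists b; split; last split.
- rewrite /b (_ : [set v | #|Dn Hmed z v| == 0%N] = [set z]) ?cards1 //.
  apply/setP => v; rewrite !inE cards_eq0.
  case: (eqVneq v z) => [->|vz]; first by rewrite Dn_z eqxx.
  by rewrite (negbTE (Dn_nz e_sym e_irr Hmed vz)).
- move=> i Hi; rewrite /b ltr0n card_gt0.
  have : (0 < #|[set A : {set 'I_(cube_dim e)} | #|A| == i]|)%N.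
    by rewrite card_draws card_ord bin_gt0.
  case/card_gt0P => A; rewrite inE => /eqP HA.
  apply/set0Pn; exists (Y (~: A)); rewrite inE (Dn_cube e_sym e_irr Hmed HY) setCK HA.
  by [].
- rewrite /cube_poly; apply: poly_id.
  + exact: Dn_le e_sym e_irr Hmed z.
  + by move=> v; rewrite ltnS max_card.
  + exact: alpha_count e_sym e_irr Hmed z.
Qed.
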